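(* Let $\mathcal H$ be a hypothesis class over $\mathcal X$ and let $R\subseteq\mathcal X$ be a set of size $n$ that is shattered by $\mathcal H$. There exist two functions $F_a,F_b$ mapping $n$-bit strings to samples of labelled examples with points from $R$ such that for every $x,y\in\{0,1\}^n$, $x\cap y=\emptyset$ (identifying bit strings with subsets of $[n]$) if and only if the joint sample $S=(F_a(x),F_b(y))$ is realizable by $\mathcal H|_R$.
   Context: A sample is a finite sequence of examples $(x,y)\in\mathcal X\times\{\pm1\}$; $(S_1,S_2)$ denotes concatenation. $\mathcal H|_R=\{h|_R:h\in\mathcal H\}$. A sample is realizable by a class if some member of the class agrees with all its examples. *)

(* Defs.v *)
From mathcomp Require Import all_boot.
Set Implicit Arguments. Unset Strict Implicit. Unset Printing Implicit Defensive.

(* Labels {+1,-1} are encoded as bool (true = +1, false = -1).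
   A hypothesis over X is a function X -> bool; a class is a predicate on them. *)
Definition hclass (X : Type) := (X -> bool) -> Prop.

Definition sample (X : Type) := seq (X * bool).

(* The finite point set R is given as a duplicate-free list; its elements form
   the subtype rpt R. *)
Definition rpt (X : eqType) (R : seq X) := {x : X | x \in R}.

Definition restrict (X : eqType) (H : hclass X) (R : seq X) :
  (rpt R -> bool) -> Prop :=
  fun g => exists h, H h /\ forall x : rpt R, g x = h (proj1_sig x).

Definition shattered (X : eqType) (H : hclass X) (R : seq X) : Prop :=
  forall f : rpt R -> bool, exists h, H h /\ forall x : rpt R, h (proj1_sig x) = f x.

Definition points_in (X : eqType) (R : seq X) (S : sample X) : Prop :=
  forall e, e \in S -> e.1 \in R.

(* A sample is realizable by a class of functions on R: some member agrees
   with all its examples (which must therefore have points in R). *)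
Definition realizable_on (X : eqType) (R : seq X)
    (C : (rpt R -> bool) -> Prop) (S : sample X) : Prop :=
  exists g, C g /\ forall e, e \in S ->
    exists hR : e.1 \in R, g (exist _ e.1 hR) = e.2.

Definition bits (n : nat) := {ffun 'I_n -> bool}.
Definition disjoint_bits (n : nat) (x y : bits n) : Prop :=
  forall i : 'I_n, ~~ (x i && y i).

(* Main.v *)
Require Import Defs.
From mathcomp Require Import all_boot.

Definition bsel (X : eqType) (R : seq X) (n : nat) (x : bits n) (r : X) : bool :=
  if @insub nat (fun k => k < n) 'I_n (index r R) is Some i then x i else false.

Definition mkS (X : eqType) (R : seq X) (n : nat) (b : bool) (x : bits n) : sample X :=
  [seq (r, b) | r <- R & @bsel X R n x r].

Lemma mkS_in (X : eqType) (R : seq X) n (b : bool) (x : bits n) (e : X * bool) :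
  e \in mkS X R n b x -> [/\ e.1 \in R, e.2 = b & @bsel X R n x e.1].
Proof.
by case/mapP=> r; rewrite mem_filter => /andP[h1 h2] ->.
Qed.

Theorem lemma4 (X : eqType) (H : hclass X) (R : seq X) (n : nat) :
  uniq R -> size R = n -> shattered H R ->
  exists (Fa Fb : bits n -> sample X),
    (forall x, points_in R (Fa x)) /\ (forall y, points_in R (Fb y)) /\
    forall x y : bits n,
      disjoint_bits x y <-> @realizable_on X R (@restrict X H R) (Fa x ++ Fb y).
Proof.
move=> uR sR sh.
exists (mkS X R n true), (mkS X R n false).
split; first by move=> x e /mkS_in [].
split; first by move=> x e /mkS_in [].
move=> x y; split.
- move=> dj.
  have [h [Hh hf]] := sh (fun p => @bsel X R n x (proj1_sig p)).
  exists (fun p => @bsel X R n x (proj1_sig p)); split.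
    by exists h; split=> // p; rewrite hf.
  move=> e; rewrite mem_cat => /orP[] /mkS_in [eR -> b]; exists eR => //=.
  move: b; rewrite /bsel; case: insubP => // i _ _ yi.
  by move: (dj i); rewrite yi andbT => /negbTE.
- case=> g [_ hg] i.
  apply/negP=> /andP[xi yi].
  have iR : i < size R by rewrite sR.
  have [a _] : exists a : X, True.
    by move: iR; clear; case: R => [|a ?] //; exists a.
  set r := nth a R i.
  have rin : r \in R by apply: mem_nth.
  have idx : index r R = i by rewrite index_uniq.
  have bx : @bsel X R n x r by rewrite /bsel idx valK.
  have bY : @bsel X R n y r by rewrite /bsel idx valK.
  have e1 : (r, true) \in mkS X R n true x ++ mkS X R n false y.
    by rewrite mem_cat; apply/orP; left; apply/mapP; exists r => //; rewrite mem_filter bx.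
  have e2 : (r, false) \in mkS X R n true x ++ mkS X R n false y.
    by rewrite mem_cat; apply/orP; right; apply/mapP; exists r => //; rewrite mem_filter bY.
  have [h1 g1] := hg _ e1.
  have [h2 g2] := hg _ e2.
  move: g1 g2 => /=; rewrite (bool_irrelevance h1 h2) => ->.
  by [].
Qed.
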